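(* Let $N\ge1$ and let $\{x_j\}_{j=0}^N$ be the Legendre–Gauss–Radau points (the zeros of $P_N(x)+P_{N+1}(x)$, with $x_0=-1$), with weights $\omega_j=\frac{1}{(N+1)^2}\frac{1-x_j}{P_N^2(x_j)}$. Let $B_0,\dots,B_N\in\mathbb{P}_N$ be defined by $B_0(-1)=1$, $B_0'(x_i)=0$ ($1\le i\le N$), and $B_j(-1)=0$, $B_j'(x_i)=\delta_{ij}$ ($1\le i,j\le N$). Then $B_0(x)=1$ and $$B_j(x)=\sum_{k=0}^{N-1}\alpha_{kj}\frac{\partial_x^{-1}P_k(x)}{\gamma_k},\qquad \alpha_{kj}=\big(P_k(x_j)-(-1)^{N+k}P_N(x_j)\big)\omega_j,\quad 1\le j\le N,$$ where $\gamma_k=\frac{2}{2k+1}$.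
   Context: $P_k$ is the Legendre polynomial of degree $k$; $\partial_x^{-1}u(x)=\int_{-1}^xu(t)\,dt$. $\mathbb{P}_N$ is the space of polynomials of degree at most $N$. *)

(* Defs.v *)
From HB Require Import structures.
From mathcomp Require Import all_boot all_order all_algebra.
Set Implicit Arguments. Unset Strict Implicit. Unset Printing Implicit Defensive.
Import Order.TTheory GRing.Theory Num.Theory.
Local Open Scope ring_scope.

Fixpoint legendre_pair (R : fieldType) (k : nat) : {poly R} * {poly R} :=
  match k with
  | 0%N => (1, 'X)
  | k'.+1 =>
      let: (p, q) := legendre_pair R k' in
      (q, (k'.+2%:R)^-1 *: ((2 * k' + 3)%N%:R *: ('X * q) - (k'.+1%:R) *: p))
  end.

Definition legendre (R : fieldType) (k : nat) : {poly R} := (legendre_pair R k).1.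

Definition poly_prim (R : fieldType) (p : {poly R}) : {poly R} :=
  \poly_(i < (size p).+1) (if i is i'.+1 then p`_i' / (i'.+1)%:R else 0).

(* partial_x^{-1} p (x) = int_{-1}^x p(t) dt *)
Definition antideriv (R : fieldType) (p : {poly R}) : {poly R} :=
  poly_prim p - ((poly_prim p).[-1])%:P.

Definition lgr_weight (R : fieldType) (N : nat) (xj : R) : R :=
  ((N.+1%:R) ^+ 2)^-1 * ((1 - xj) / ((legendre R N).[xj]) ^+ 2).

Definition lgamma (R : fieldType) (k : nat) : R := 2 / (2 * k + 1)%N%:R.

Definition lalpha (R : fieldType) (N k : nat) (xj : R) : R :=
  ((legendre R k).[xj] - (-1) ^+ (N + k) * (legendre R N).[xj]) * lgr_weight N xj.

(* Main.v *)
Require Import Defs.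
From HB Require Import structures.
From mathcomp Require Import all_boot all_order all_algebra.
From mathcomp Require Import ring lra.
Import Order.TTheory GRing.Theory Num.Theory.
Local Open Scope ring_scope.

Lemma natr_nz (R : realFieldType) n : (n.+1%:R : R) != 0.
Proof. by rewrite pnatr_eq0. Qed.

Lemma leg0 (R : fieldType) : legendre R 0 = 1.
Proof. by []. Qed.
Lemma leg1 (R : fieldType) : legendre R 1 = 'X.
Proof. by []. Qed.
Lemma legS (R : fieldType) k : legendre R k.+2 =
  (k.+2%:R)^-1 *: ((2 * k + 3)%N%:R *: ('X * legendre R k.+1) - (k.+1%:R) *: legendre R k).
Proof. by rewrite /legendre /=; case: (legendre_pair R k). Qed.

Lemma size_leg (R : fieldType) k : (size (legendre R k) <= k.+1)%N /\ (size (legendre R k.+1) <= k.+2)%N.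
Proof.
elim: k => [|k [IH1 IH2]]; first by rewrite leg0 leg1 size_polyX size_poly1.
split => //; rewrite legS.
apply: leq_trans (size_scale_leq _ _) _.
apply: leq_trans (size_polyD _ _) _; rewrite size_polyN geq_max; apply/andP; split.
- apply: leq_trans (size_scale_leq _ _) _; rewrite mulrC.
  have [->|nz] := eqVneq (legendre R k.+1) 0; first by rewrite mul0r size_poly0.
  by rewrite size_mulX.
- apply: leq_trans (size_scale_leq _ _) _. by apply: leq_trans IH1 _; rewrite ltnW.
Qed.

Definition pe (R : fieldType) k (x : R) := (legendre R k).[x].
Definition de (R : fieldType) k (x : R) := (legendre R k)^`().[x].

Lemma pe_rec (R : realFieldType) k x : pe R k.+2 x =
  ((2 * k%:R + 3) * x * pe R k.+1 x - k.+1%:R * pe R k x) / k.+2%:R.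
Proof.
rewrite /pe legS hornerZ hornerD hornerN !hornerZ hornerM hornerX.
have := natr_nz R k.+1; rewrite natrD natrM /= => h. field.
by rewrite -[2 + _](natrD R 2 k) natr_nz.
Qed.

Lemma de_rec (R : realFieldType) k x : de R k.+2 x =
  ((2 * k%:R + 3) * (pe R k.+1 x + x * de R k.+1 x) - k.+1%:R * de R k x) / k.+2%:R.
Proof.
rewrite /pe /de legS !derivE !hornerE /=.
have := natr_nz R k.+1 => h. field.
by rewrite -[2 + _](natrD R 2 k) natr_nz.
Qed.

Lemma pe0 (R : fieldType) x : pe R 0 x = 1.
Proof. by rewrite /pe hornerE. Qed.
Lemma pe1 (R : fieldType) x : pe R 1 x = x.
Proof. by rewrite /pe hornerX. Qed.
Lemma de0 (R : fieldType) x : de R 0 x = 0.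
Proof. by rewrite /de leg0 derivC hornerE. Qed.
Lemma de1 (R : fieldType) x : de R 1 x = 1.
Proof. by rewrite /de leg1 derivX hornerE. Qed.

Lemma two3 (R : realFieldType) k : (2 + k%:R : R) != 0.
Proof. by rewrite -[2 + _](natrD R 2 k) natr_nz. Qed.

Lemma pe_m1 (R : realFieldType) k : pe R k (-1) = (-1) ^+ k /\ pe R k.+1 (-1) = (-1) ^+ k.+1.
Proof.
elim: k => [|k [IH1 IH2]]; first by rewrite pe0 pe1 expr0 expr1.
split => //; rewrite pe_rec IH1 IH2 !exprS.
have := natr_nz R k.+1 => h. field. exact: two3.
Qed.

Lemma diff_id (R : realFieldType) n x :
  (1 - x ^+ 2) * de R n.+1 x = n.+1%:R * (pe R n x - x * pe R n.+1 x) /\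
  (1 - x ^+ 2) * de R n x = n.+1%:R * (x * pe R n x - pe R n.+1 x).
Proof.
elim: n => [|n [IHA IHB]]; first by rewrite de1 de0 pe0 pe1; split; ring.
split; last first.
  rewrite IHA pe_rec. have := natr_nz R n.+1 => h. field. exact: two3.
have -> : (1 - x ^+ 2) * de R n.+2 x = ((2 * n%:R + 3) * ((1 - x ^+ 2) * pe R n.+1 x
     + x * ((1 - x ^+ 2) * de R n.+1 x)) - n.+1%:R * ((1 - x ^+ 2) * de R n x)) / n.+2%:R.
  rewrite de_rec. have := natr_nz R n.+1 => h. field. exact: two3.
rewrite IHA IHB pe_rec. have := natr_nz R n.+1 => h. field. exact: two3.
Qed.

Definition S2 (R : fieldType) n (x y : R) :=
  \sum_(k < n) (2 * k + 1)%N%:R * (pe R k x * pe R k y).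

Lemma CD (R : realFieldType) n x y :
  (x - y) * S2 R n.+1 x y = n.+1%:R * (pe R n.+1 x * pe R n y - pe R n x * pe R n.+1 y).
Proof.
elim: n => [|n IH].
  by rewrite /S2 big_ord1 !pe0 !pe1 /=; ring.
rewrite /S2 big_ord_recr /= -/(S2 R n.+1 x y) mulrDr IH !pe_rec.
have := natr_nz R n.+1 => h. field. exact: two3.
Qed.

Lemma CDconf (R : realFieldType) n x :
  S2 R n.+1 x x = n.+1%:R * (de R n.+1 x * pe R n x - de R n x * pe R n.+1 x).
Proof.
elim: n => [|n IH].
  by rewrite /S2 big_ord1 !pe0 !pe1 de0 de1 /=; ring.
rewrite /S2 big_ord_recr /= -/(S2 R n.+1 x x) IH pe_rec de_rec.
have := natr_nz R n.+1 => h. field. exact: two3.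
Qed.

Lemma sign2 (R : realFieldType) N : (-1) ^+ N * (-1) ^+ N = 1 :> R.
Proof. by rewrite -exprD -signr_odd addnn odd_double expr0. Qed.

Lemma S2_pos (R : realFieldType) n b : 0 < S2 R n.+1 b b.
Proof.
rewrite /S2 big_ord_recl /= pe0 !mul1r.
apply: (@lt_le_trans _ _ 1); first exact: ltr01.
rewrite lerDl; apply: sumr_ge0 => i _; apply: mulr_ge0; first exact: ler0n.
by rewrite -expr2 sqr_ge0.
Qed.

Lemma S2_root (R : realFieldType) N a b : a != b ->
  pe R N.+1 a = - pe R N a -> pe R N.+1 b = - pe R N b -> S2 R N.+1 a b = 0.
Proof.
move=> hab ha hb; have := CD R N a b; rewrite ha hb.
have -> : N.+1%:R * (- pe R N a * pe R N b - pe R N a * - pe R N b) = 0 by ring.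
move/eqP; rewrite mulf_eq0 subr_eq0 (negbTE hab) /=; by move/eqP.
Qed.

Lemma key (R : realFieldType) N (a b : R) : a != -1 -> b != -1 ->
  pe R N.+1 a = - pe R N a -> pe R N.+1 b = - pe R N b ->
  \sum_(k < N) (lalpha N k b / lgamma R k) * pe R k a = (a == b)%:R.
Proof.
move=> ha1 hb1 ha hb.
have hm1 : pe R N.+1 (-1) = - pe R N (-1).
  by rewrite (pe_m1 R N).1 (pe_m1 R N).2 exprS mulN1r.
set w := lgr_weight N b.
have E : \sum_(k < N) (lalpha N k b / lgamma R k) * pe R k a =
   w / 2 * (S2 R N b a - (-1) ^+ N * pe R N b * S2 R N (-1) a).
  rewrite /S2 mulr_sumr -sumrB mulr_sumr; apply: eq_bigr => k _.
  rewrite /lalpha /lgamma -/w exprD -(pe_m1 R k).1.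
  have hk : ((2 * k + 1)%N%:R : R) != 0 by rewrite addn1 natr_nz.
  rewrite -/(pe R k b) -/(pe R N b). field; have := ler0n R k; lra.
have S2N : forall u v, S2 R N u v = S2 R N.+1 u v - (2 * N + 1)%N%:R * (pe R N u * pe R N v).
  by move=> u v; rewrite /S2 big_ord_recr /= addrK.
rewrite E S2N (S2N (-1)) (@S2_root R N (-1) a) ?hm1 //; last by rewrite eq_sym.
rewrite (pe_m1 R N).1.
have -> : w / 2 * (S2 R N.+1 b a - (2 * N + 1)%N%:R * (pe R N b * pe R N a) -
    (-1) ^+ N * pe R N b * (0 - (2 * N + 1)%N%:R * ((-1) ^+ N * pe R N a)))
   = w / 2 * S2 R N.+1 b a + w / 2 * (2 * N + 1)%N%:R * pe R N b * pe R N a * ((-1) ^+ N * (-1) ^+ N - 1) by ring.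
rewrite sign2 subrr mulr0 addr0.
have [hab|hab] := eqVneq a b; last first.
  by rewrite (@S2_root R N b a) ?mulr0 // eq_sym.
subst b; rewrite CDconf.
have [dd1 dd0] := diff_id R N a.
set p := pe R N a in dd1 dd0 ha *; set d1 := de R N.+1 a in dd1 *; set d0 := de R N a in dd0 *.
rewrite ha in dd1 dd0 *.
have hp : p != 0.
  apply/negP => /eqP p0; have := S2_pos R N a.
  by rewrite CDconf ha -/p p0 oppr0 !mulr0 subr0 mulr0 ltxx.
have hD : (1 - a) * (d1 + d0) = 2 * N.+1%:R * p.
  have h1a : 1 + a != 0.
    by apply: contra ha1; rewrite addrC addr_eq0 => /eqP ->.
  apply: (mulfI h1a); rewrite mulrA -[(1 + a) * (1 - a)](_ : 1 - a ^+ 2 = _); last by ring.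
  rewrite mulrDr dd1 dd0; ring.
rewrite /w /lgr_weight -/(pe R N a) -/p /=.
have hN := natr_nz R N.
have -> : ((N.+1%:R ^+ 2)^-1 * ((1 - a) / p ^+ 2)) / 2 * (N.+1%:R * (d1 * p - d0 * - p))
   = ((N.+1%:R ^+ 2)^-1 / p / 2 * N.+1%:R) * ((1 - a) * (d1 + d0)).
  by field; rewrite hp /= addrC natr1.
rewrite hD; field; rewrite ?hp /= addrC natr1 //.
Qed.

Lemma vanish (R : realFieldType) N (x : 'I_N.+1 -> R) : injective x ->
  forall q : {poly R}, (size q <= N)%N ->
  (forall i : 'I_N.+1, (0 < i)%N -> q.[x i] = 0) -> q = 0.
Proof.
move=> hx q hs hq; apply/eqP; apply/negPn/negP => nz.
have := @max_poly_roots _ q [seq x (lift ord0 i) | i <- enum 'I_N] nz.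
rewrite size_map size_enum_ord.
have -> : all (root q) [seq x (lift ord0 i) | i <- enum 'I_N].
  by apply/allP => y /mapP [i _ ->]; rewrite /root; apply/eqP; apply: hq.
rewrite map_inj_uniq ?enum_uniq; last by move=> i j /hx /lift_inj.
move=> /(_ isT isT) h; have := leq_ltn_trans hs h; by rewrite ltnn.
Qed.

Lemma deriv0_const (R : realFieldType) (p : {poly R}) c : p^`() = 0 -> p = (p.[c])%:P.
Proof.
move=> hd.
have hs : (size p <= 1)%N.
  case E: (size p) => [|[|n]] //.
  have : p^`()`_n = 0 by rewrite hd coef0.
  rewrite coef_deriv => /eqP; rewrite mulrn_eq0 /= => /eqP h.
  have : lead_coef p = 0 by rewrite lead_coefE E.
  move/eqP; rewrite lead_coef_eq0 => /eqP p0.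
  by rewrite p0 size_poly0 in E.
by rewrite [in LHS](size1_polyC hs) [in p.[c]](size1_polyC hs) hornerC.
Qed.

Lemma size_deriv_le (R : realFieldType) (p : {poly R}) : (size p^`() <= (size p).-1)%N.
Proof.
have [->|nz] := eqVneq p 0; first by rewrite deriv0 size_poly0.
have := lt_size_deriv nz; case: (size p) => //.
Qed.

Lemma deriv_antideriv (R : realFieldType) (p : {poly R}) : (antideriv p)^`() = p.
Proof.
rewrite /antideriv derivB derivC subr0; apply/polyP => i.
rewrite coef_deriv /poly_prim coef_poly.
case: ifP => hi; first by rewrite -[_ *+ i.+1]mulr_natr divfK ?natr_nz.
rewrite mul0rn nth_default //; move: hi; rewrite ltnS => /negbT; by rewrite -leqNgt.
Qed.

Lemma antideriv_m1 (R : realFieldType) (p : {poly R}) : (antideriv p).[-1] = 0.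
Proof. by rewrite /antideriv hornerD hornerN hornerC subrr. Qed.

Theorem proposition4p3 (R : realFieldType) (N : nat) (hN : (0 < N)%N)
  (x : 'I_N.+1 -> R)
  (hx_inj : injective x)
  (hx_root : forall j, root (legendre R N + legendre R N.+1) (x j))
  (hx0 : x ord0 = -1)
  (B : 'I_N.+1 -> {poly R})
  (hBdeg : forall j, (size (B j) <= N.+1)%N)
  (hB0a : (B ord0).[-1] = 1)
  (hB0b : forall i : 'I_N.+1, (0 < i)%N -> (B ord0)^`().[x i] = 0)
  (hBja : forall j : 'I_N.+1, (0 < j)%N -> (B j).[-1] = 0)
  (hBjb : forall i j : 'I_N.+1, (0 < i)%N -> (0 < j)%N ->
            (B j)^`().[x i] = (i == j)%:R) :
  B ord0 = 1 /\
  forall j : 'I_N.+1, (0 < j)%N ->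
    B j = \sum_(k < N) (lalpha N k (x j) / lgamma R k) *: antideriv (legendre R k).
Proof.
have hsd : forall j, (size (B j)^`() <= N)%N.
  move=> j; apply: (leq_trans (size_deriv_le _ (B j))); have := hBdeg j; by case: (size (B j)).
have hroot : forall i, pe R N.+1 (x i) = - pe R N (x i).
  move=> i; have := hx_root i; rewrite /root hornerD addrC addr_eq0 => /eqP.
  by rewrite /pe.
have hne : forall i : 'I_N.+1, (0 < i)%N -> x i != -1.
  move=> i hi; rewrite -hx0 (inj_eq hx_inj); apply/negP => /eqP hi0.
  by rewrite hi0 in hi.
split.
  have hd : (B ord0)^`() = 0 by apply: (@vanish R N x hx_inj) => //; exact: hsd.
  by rewrite (deriv0_const _ _ (-1) hd) hB0a.
move=> j hj.
set Q := \sum_(k < N) _.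
have hQ : Q^`() = \sum_(k < N) (lalpha N k (x j) / lgamma R k) *: legendre R k.
  rewrite /Q linear_sum; apply: eq_bigr => k _; by rewrite linearZ /= deriv_antideriv.
apply/eqP; rewrite -subr_eq0; apply/eqP.
have hd : (B j - Q)^`() = 0.
  apply: (@vanish R N x hx_inj).
  - rewrite derivB; apply: leq_trans (size_polyD _ _) _; rewrite size_polyN geq_max hsd /= hQ.
    apply: (big_ind (fun q : {poly R} => (size q <= N)%N)).
    + by rewrite size_poly0.
    + by move=> p q hp hq; apply: leq_trans (size_polyD _ _) _; rewrite geq_max hp hq.
    + move=> k _; apply: leq_trans (size_scale_leq _ _) _.
      by apply: leq_trans (size_leg R k).1 _.
  - move=> i hi; rewrite derivB hornerD hornerN hBjb // hQ horner_sum.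
    under eq_bigr => k _ do rewrite hornerZ -/(pe R k (x i)).
    rewrite key ?hne ?hroot // (inj_eq hx_inj) subrr //.
rewrite (deriv0_const _ _ (-1) hd) hornerD hornerN hBja // /Q horner_sum.
rewrite big1 ?subrr //; by move=> k _; rewrite hornerZ antideriv_m1 mulr0.
Qed.
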